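(* Let $U,K\ge1$ and $t_{ji}\in(0,1]$ for $j=1,\ldots,U$, $i=1,\ldots,K$. Consider the POMDP with world states $w_{10}$ and $w_{ji}$ ($j=1,\ldots,U$, $i=1,\ldots,K$), actions $A=\{1,\ldots,K\}$, and sensor states $S=\{1,\ldots,U\}$, where (setting $w_{j,0}:=w_{j-1,K}$ for $j\ge2$) world state $w_{j,i-1}$ is deterministically sensed as $s=j$ for all $j=1,\ldots,U$, $i=1,\ldots,K$, and $w_{UK}$ is sensed as $s=1$. From $w_{j,i-1}$, action $i$ takes the agent to $w_{ji}$ with probability $t_{ji}$ and to $w_{10}$ with probability $1-t_{ji}$, and every other action takes it to $w_{10}$; from $w_{UK}$ every action takes it to $w_{10}$. The reward is $1$ at $w_{UK}$ and $0$ elsewhere. Write $\pi_{ji}=\pi(a=i|s=j)$. The optimal memoryless policy (maximizer of the average reward $p^\pi(w_{UK})$) is given, for $j=1,\ldots,U$, by $\pi_{j1}=c_jd_j$ and $\pi_{ji}=\pi_{j,i-1}+c_je_j\,t_{j1}\pi_{j1}\cdots t_{j,i-1}\pi_{j,i-1}$ for $i=2,\ldots,K$, where $d_j=1+t_{11}\pi_{11}+\cdots+t_{11}\pi_{11}\cdots t_{j-1,K}\pi_{j-1,K}$ (the sum of $1$ and all products $t_{11}\pi_{11}\cdots t_{kl}\pi_{kl}$ over indices $(k,l)$ preceding $(j,1)$ in the order $(1,1),\ldots,(1,K),(2,1),\ldots$), $e_j=t_{11}\pi_{11}\cdots t_{j-1,K}\pi_{j-1,K}$, and $c_j$ is the unique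 real positive solution of $\pi_{j1}+\cdots+\pi_{jK}=1$. Empty products are $1$ and empty sums $0$.
   Context: Under a stationary policy $\pi$ the world states form a Markov chain; $p^\pi$ denotes its stationary distribution and the expected reward per time step is $p^\pi(w_{UK})$. Note $d_j,e_j$ depend only on the policy entries for sensor states $1,\ldots,j-1$, so the $c_j$ and $\pi_{j\cdot}$ are determined successively for $j=1,\ldots,U$. *)

(* Defs.v *)
From mathcomp Require Import all_boot all_order all_algebra.
From mathcomp Require Export reals.
Unset Printing Implicit Defensive.
Import Order.TTheory GRing.Theory Num.Theory.
Local Open Scope ring_scope.

(* Conventions (all 0-based): sensor state j+1 <-> j < U, action i+1 <-> i < K,
   t j i = t_{j+1,i+1}, pi j i = pi(a=i+1 | s=j+1).
   World states are 'I_(U*K).+1: index 0 is w_{10}, index (j-1)*K+i is w_{ji}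
   (1-based j,i); hence ord_max (= U*K) is w_{UK}.  A state n < U*K is
   w_{j,i-1} with j-1 = n %/ K, i-1 = n %% K, sensed as s = j; w_{UK} is
   sensed as s = 1 and moves to w_{10} under every action. *)

Section Defs.
Variable R : realType.

Definition is_policy (U K : nat) (pi : nat -> nat -> R) : Prop :=
  forall j, (j < U)%N ->
    (forall i, (i < K)%N -> 0 <= pi j i) /\ \sum_(i < K) pi j i = 1.

Definition trans (U K : nat) (t pi : nat -> nat -> R)
    (n m : 'I_(U * K).+1) : R :=
  if (n < U * K)%N then
    let a := t (n %/ K)%N (n %% K)%N * pi (n %/ K)%N (n %% K)%N in
    (if (m : nat) == n.+1 then a else 0) + (if (m : nat) == 0%N then 1 - a else 0)
  else (if (m : nat) == 0%N then 1 else 0).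

Definition is_stationary (N : nat) (P : 'I_N -> 'I_N -> R) (p : 'I_N -> R) : Prop :=
  (forall m, 0 <= p m) /\ \sum_m p m = 1 /\
  (forall m, \sum_n p n * P n m = p m).

Definition prefprod (K : nat) (t pi : nat -> nat -> R) (q : nat) : R :=
  \prod_(r < q) (t (r %/ K)%N (r %% K)%N * pi (r %/ K)%N (r %% K)%N).

(* d_j (0-based j): 1 + all products over indices preceding (j+1,1) *)
Definition dcoef (K : nat) (t pi : nat -> nat -> R) (j : nat) : R :=
  \sum_(q < (j * K).+1) prefprod K t pi q.

Definition ecoef (K : nat) (t pi : nat -> nat -> R) (j : nat) : R :=
  prefprod K t pi (j * K).

Definition formula (U K : nat) (t : nat -> nat -> R) (c : nat -> R)
    (pi : nat -> nat -> R) : Prop :=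
  forall j, (j < U)%N ->
    pi j 0%N = c j * dcoef K t pi j /\
    (forall i, (0 < i < K)%N ->
       pi j i = pi j i.-1 + c j * ecoef K t pi j * \prod_(l < i) (t j l * pi j l)).

Definition admissible (U K : nat) (t : nat -> nat -> R) (c : nat -> R)
    (pi : nat -> nat -> R) : Prop :=
  (forall j, (j < U)%N -> 0 < c j) /\ formula U K t c pi /\
  (forall j, (j < U)%N -> \sum_(i < K) pi j i = 1).

End Defs.

Arguments is_policy {R} U K pi.
Arguments trans {R} U K t pi n m.
Arguments is_stationary {R} N P p.
Arguments prefprod {R} K t pi q.
Arguments dcoef {R} K t pi j.
Arguments ecoef {R} K t pi j.
Arguments formula {R} U K t c pi.
Arguments admissible {R} U K t c pi.

(* Main.v *)
Require Import Defs.
From mathcomp Require Import all_boot all_order all_algebra reals.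
From mathcomp Require Import exp.
From mathcomp Require Import ring lra zify.
Import Order.TTheory GRing.Theory Num.Theory.
Local Open Scope ring_scope.
Set Implicit Arguments.
Unset Strict Implicit.



Definition xx {R : realType} (K : nat) (t pi : nat -> nat -> R) (r : nat) : R :=
  t (r %/ K)%N (r %% K)%N * pi (r %/ K)%N (r %% K)%N.

Definition DD {R : realType} (K : nat) (t pi : nat -> nat -> R) (n : nat) : R :=
  \sum_(m < n.+1) prefprod K t pi m.

Lemma prefprod0 (R : realType) K (t pi : nat -> nat -> R) : prefprod K t pi 0 = 1.
Proof. by rewrite /prefprod big_ord0. Qed.

Lemma prefprodS (R : realType) K (t pi : nat -> nat -> R) q :
  prefprod K t pi q.+1 = prefprod K t pi q * xx K t pi q.
Proof. by rewrite /prefprod big_ord_recr. Qed.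

Lemma DDS (R : realType) K (t pi : nat -> nat -> R) n :
  DD K t pi n.+1 = DD K t pi n + prefprod K t pi n.+1.
Proof. by rewrite /DD big_ord_recr. Qed.

Lemma divmod_row K j i : (i < K)%N -> ((j*K + i) %/ K = j)%N /\ ((j*K+i) %% K = i)%N.
Proof.
move=> hi; have hK : (0 < K)%N by lia.
by rewrite divnMDl // divn_small // addn0 modnMDl modn_small.
Qed.

Lemma prefprod_row (R : realType) K (t pi : nat -> nat -> R) j i : (i <= K)%N ->
  prefprod K t pi (j*K + i) = prefprod K t pi (j*K) * \prod_(l < i) (t j l * pi j l).
Proof.
elim: i => [|i IH] hi; first by rewrite addn0 big_ord0 mulr1.
rewrite addnS prefprodS IH; last by lia.
have [h1 h2] := @divmod_row K j i hi.
by rewrite big_ord_recr /= -mulrA /xx h1 h2.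
Qed.

Lemma prefprod_local (R : realType) K (t pi pi' : nat -> nat -> R) q j : (0 < K)%N ->
  (forall k i, (k < j)%N -> (i < K)%N -> pi k i = pi' k i) -> (q <= j*K)%N ->
  prefprod K t pi q = prefprod K t pi' q.
Proof.
move=> hK h hq; apply: eq_bigr => r _.
have hr : (r %/ K < j)%N by rewrite ltn_divLR //; have := ltn_ord r; lia.
by rewrite /xx h // ltn_mod.
Qed.

Lemma DD_local (R : realType) K (t pi pi' : nat -> nat -> R) j : (0 < K)%N ->
  (forall k i, (k < j)%N -> (i < K)%N -> pi k i = pi' k i) ->
  DD K t pi (j * K) = DD K t pi' (j * K).
Proof.
move=> hK h; apply: eq_bigr => q _; apply: (@prefprod_local R K t pi pi' q j hK h).
by have := ltn_ord q; lia.
Qed.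

Lemma prefprod_gt0 (R : realType) K (t pi : nat -> nat -> R) m :
  (forall s, (s < m)%N -> 0 < xx K t pi s) -> 0 < prefprod K t pi m.
Proof. by move=> h; apply: prodr_gt0 => s _; apply: h. Qed.

Lemma prefprod_ge0 (R : realType) K (t pi : nat -> nat -> R) m :
  (forall s, (s < m)%N -> 0 <= xx K t pi s) -> 0 <= prefprod K t pi m.
Proof. by move=> h; apply: prodr_ge0 => s _; apply: h. Qed.

Lemma DD_ge1 (R : realType) K (t pi : nat -> nat -> R) n :
  (forall s, (s < n)%N -> 0 <= xx K t pi s) -> 1 <= DD K t pi n.
Proof.
move=> h; rewrite /DD big_ord_recl /= prefprod0.
have : 0 <= \sum_(i < n) prefprod K t pi (bump 0 i).
  apply: sumr_ge0 => i _; apply: prefprod_ge0 => s hs; apply: h.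
  move: hs; rewrite /bump leq0n add1n; have := ltn_ord i; lia.
lra.
Qed.

Definition roweq {R : realType} (K : nat) (t : nat -> nat -> R) (c : R)
    (pi : nat -> nat -> R) (j : nat) : Prop :=
    pi j 0%N = c * dcoef K t pi j /\
    (forall i, (0 < i < K)%N ->
       pi j i = pi j i.-1 + c * ecoef K t pi j * \prod_(l < i) (t j l * pi j l)).

Lemma row_D (R : realType) K (t pi : nat -> nat -> R) c j :
  roweq K t c pi j -> forall i, (i < K)%N -> pi j i = c * DD K t pi (j * K + i).
Proof.
case=> h0 hS; elim=> [|i IH] hi; first by rewrite addn0 h0.
rewrite hS; last by lia.
rewrite /= IH; last by lia.
rewrite addnS DDS -addnS prefprod_row; last by lia.
by rewrite /ecoef mulrDr mulrA.
Qed.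

Lemma pi_pos (R : realType) K (t pi : nat -> nat -> R) (c : nat -> R) n : (0 < K)%N ->
  (forall j i, (j < n)%N -> (i < K)%N -> 0 < t j i) ->
  (forall j, (j < n)%N -> 0 < c j /\ roweq K t (c j) pi j) ->
  forall r, (r < n * K)%N -> 0 < pi (r %/ K)%N (r %% K)%N.
Proof.
move=> hK ht hc; elim/ltn_ind => r IH hr.
have hj : (r %/ K < n)%N by rewrite ltn_divLR.
have [c0 hrow] := hc _ hj.
have hi : (r %% K < K)%N by rewrite ltn_mod.
rewrite (@row_D R K t pi _ _ hrow _ hi) -divn_eq.
apply: mulr_gt0 => //.
apply: (lt_le_trans ltr01); apply: DD_ge1 => s hs.
rewrite /xx; apply: mulr_ge0; apply: ltW.
  apply: ht; last by rewrite ltn_mod.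
  rewrite ltn_divLR //; lia.
apply: IH => //; lia.
Qed.



Lemma sum_lt (R : realType) K (f g : nat -> R) : (0 < K)%N ->
  (forall i, (i < K)%N -> f i < g i) -> \sum_(i < K) f i < \sum_(i < K) g i.
Proof.
case: K => // K _ h; rewrite !big_ord_recl; apply: ltr_leD; first exact: h.
by apply: ler_sum => i _; apply: ltW; apply: h.
Qed.

Lemma row_mono (R : realType) K (tj : nat -> R) (d e c c' : R) (a b : nat -> R) :
  (forall l, (l < K)%N -> 0 < tj l) -> 0 < d -> 0 <= e -> 0 < c -> c < c' ->
  a 0%N = c * d -> b 0%N = c' * d ->
  (forall i, (0 < i < K)%N -> a i = a i.-1 + c * e * \prod_(l < i) (tj l * a l)) ->
  (forall i, (0 < i < K)%N -> b i = b i.-1 + c' * e * \prod_(l < i) (tj l * b l)) ->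
  forall i, (i < K)%N -> 0 < a i < b i.
Proof.
move=> ht hd he hc hcc ha0 hb0 haS hbS; elim/ltn_ind => i IH hi.
case: i IH hi => [|i] IH hi.
  by rewrite ha0 hb0 mulr_gt0 //= ltr_pM2r.
rewrite haS; last by lia.
rewrite hbS /=; last by lia.
have /andP[h1 h2] : 0 < a i < b i by apply: IH; lia.
have hP : \prod_(l < i.+1) (tj l * a l) <= \prod_(l < i.+1) (tj l * b l).
  apply: ler_prod => l _.
  have /andP[h3 h4] : 0 < a l < b l by apply: IH; have := ltn_ord l; lia.
  have htl : 0 < tj l by apply: ht; have := ltn_ord l; lia.
  apply/andP; split; first by apply: mulr_ge0; apply: ltW.
  by apply: ler_wpM2l; apply: ltW.
have hP0 : 0 <= \prod_(l < i.+1) (tj l * a l).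
  apply: prodr_ge0 => l _.
  have /andP[h3 h4] : 0 < a l < b l by apply: IH; have := ltn_ord l; lia.
  have htl : 0 < tj l by apply: ht; have := ltn_ord l; lia.
  by rewrite mulr_ge0 ?ltW.
have hce : 0 <= c * e by apply: mulr_ge0 => //; apply: ltW.
have h5 : c * e * \prod_(l < i.+1) (tj l * a l) <= c' * e * \prod_(l < i.+1) (tj l * b l).
  apply: ler_pM => //.
  by apply: ler_wpM2r => //; apply: ltW.
have h6 : 0 <= c * e * \prod_(l < i.+1) (tj l * a l) by apply: mulr_ge0.
apply/andP; split; lra.
Qed.

Lemma row_eq (R : realType) K (tj : nat -> R) (d e c : R) (a b : nat -> R) :
  a 0%N = c * d -> b 0%N = c * d ->
  (forall i, (0 < i < K)%N -> a i = a i.-1 + c * e * \prod_(l < i) (tj l * a l)) ->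
  (forall i, (0 < i < K)%N -> b i = b i.-1 + c * e * \prod_(l < i) (tj l * b l)) ->
  forall i, (i < K)%N -> a i = b i.
Proof.
move=> ha0 hb0 haS hbS; elim/ltn_ind => i IH hi.
case: i IH hi => [|i] IH hi; first by rewrite ha0 hb0.
rewrite haS; last by lia.
rewrite hbS /=; last by lia.
rewrite IH //; last lia.
congr (_ + _); congr (_ * _); apply: eq_bigr => l _.
by rewrite IH //; have := ltn_ord l; lia.
Qed.

Lemma adm_rows (R : realType) U K (t : nat -> nat -> R) c pi :
  admissible U K t c pi -> forall j, (j < U)%N -> 0 < c j /\ roweq K t (c j) pi j.
Proof. by case=> hc [hf _] j hj; split; [apply: hc | apply: hf]. Qed.

Lemma adm_xpos (R : realType) U K (t : nat -> nat -> R) c pi : (0 < K)%N ->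
  (forall j i, (j < U)%N -> (i < K)%N -> 0 < t j i <= 1) ->
  admissible U K t c pi -> forall r, (r < U * K)%N -> 0 < xx K t pi r.
Proof.
move=> hK ht ha r hr; rewrite /xx; apply: mulr_gt0.
  have hj : (r %/ K < U)%N by rewrite ltn_divLR.
  have hi : (r %% K < K)%N by rewrite ltn_mod.
  by case/andP: (ht _ _ hj hi).
apply: (pi_pos hK _ (adm_rows ha)) => // j i hj hi.
by case/andP: (ht j i hj hi).
Qed.

Lemma adm_sum (R : realType) U K (t : nat -> nat -> R) c pi :
  admissible U K t c pi -> forall j, (j < U)%N -> \sum_(i < K) pi j i = 1.
Proof. by case=> _ [_ h]. Qed.

Lemma uniq_rows (R : realType) U K (t : nat -> nat -> R) c c' pi pi' : (0 < K)%N ->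
  (forall j i, (j < U)%N -> (i < K)%N -> 0 < t j i <= 1) ->
  admissible U K t c pi -> admissible U K t c' pi' ->
  forall j, (j < U)%N -> c j = c' j /\ forall i, (i < K)%N -> pi j i = pi' j i.
Proof.
move=> hK ht ha ha'; elim/ltn_ind => j IH hj.
have hloc : forall k i, (k < j)%N -> (i < K)%N -> pi k i = pi' k i.
  by move=> k i hk hi; case: (IH k hk) => [|_ ->] //; lia.
have [hc [h0 hS]] := adm_rows ha hj.
have [hc' [h0' hS']] := adm_rows ha' hj.
have hd : dcoef K t pi' j = dcoef K t pi j.
  by have := DD_local t hK hloc; rewrite /DD /dcoef => ->.
have he : ecoef K t pi' j = ecoef K t pi j.
  by rewrite /ecoef (prefprod_local t (j:=j) hK hloc).
rewrite hd in h0'; rewrite he in hS'.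
have hx : forall s, (s < j * K)%N -> 0 < xx K t pi s.
  move=> s hs; apply: (adm_xpos hK ht ha).
  have : (j * K <= U * K)%N by rewrite leq_mul2r (ltnW hj) orbT.
  lia.
have dpos : 0 < dcoef K t pi j.
  apply: (lt_le_trans ltr01); apply: DD_ge1 => s hs; apply: ltW; exact: hx.
have epos : 0 <= ecoef K t pi j.
  by apply: prefprod_ge0 => s hs; apply: ltW; exact: hx.
have htj : forall l, (l < K)%N -> 0 < t j l by move=> l hl; case/andP: (ht j l hj hl).
have hsum := adm_sum ha hj; have hsum' := adm_sum ha' hj.
have ceq : c j = c' j.
  case: (ltgtP (c j) (c' j)) => // hlt.
  - have := sum_lt hK (fun i hi => proj2 (elimT andP (row_mono htj dpos epos hc hlt h0 h0' hS hS' hi))).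
    by rewrite hsum hsum' ltxx.
  - have := sum_lt hK (fun i hi => proj2 (elimT andP (row_mono htj dpos epos hc' hlt h0' h0 hS' hS hi))).
    by rewrite hsum hsum' ltxx.
split => //.
rewrite -ceq in h0' hS'.
exact: (row_eq h0 h0' hS hS').
Qed.



Fixpoint rvp {R : comNzRingType} (c d e : R) (tj : nat -> R) (i : nat) : R * R :=
  match i with
  | 0%N => (c * d, 1)
  | i'.+1 => let r := rvp c d e tj i' in
             let p := r.2 * (tj i' * r.1) in (r.1 + c * e * p, p)
  end.

Lemma rvp_snd (R : comNzRingType) (c d e : R) tj i :
  (rvp c d e tj i).2 = \prod_(l < i) (tj l * (rvp c d e tj l).1).
Proof. by elim: i => [|i IH]; rewrite ?big_ord0 // big_ord_recr /= IH. Qed.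

Lemma rvp_rec (R : comNzRingType) (c d e : R) tj i : (0 < i)%N ->
  (rvp c d e tj i).1 = (rvp c d e tj i.-1).1 + c * e * \prod_(l < i) (tj l * (rvp c d e tj l).1).
Proof. by case: i => // i _; rewrite -rvp_snd. Qed.

Lemma rvp_horner (R : realType) (c d e : R) (tj : nat -> R) i :
  ((rvp 'X d%:P e%:P (fun l => (tj l)%:P) i).1).[c] = (rvp c d e tj i).1 /\
  ((rvp 'X d%:P e%:P (fun l => (tj l)%:P) i).2).[c] = (rvp c d e tj i).2.
Proof.
elim: i => [|i [IH1 IH2]] /=; first by rewrite hornerM hornerX hornerC hornerC.
by rewrite !(hornerD, hornerM, hornerC, hornerX) IH1 IH2.
Qed.

Lemma rvp_ge0 (R : realType) (c d e : R) (tj : nat -> R) :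
  0 <= c -> 0 <= d -> 0 <= e -> (forall l, 0 <= tj l) -> forall i,
  c * d <= (rvp c d e tj i).1 /\ 0 <= (rvp c d e tj i).2.
Proof.
move=> hc hd he ht; elim => [|i [IH1 IH2]] /=; first by split.
have h0 : 0 <= c * d by apply: mulr_ge0.
have h1 : 0 <= (rvp c d e tj i).2 * (tj i * (rvp c d e tj i).1).
  by apply: mulr_ge0 => //; apply: mulr_ge0 => //; apply: le_trans IH1.
have h2 : 0 <= c * e * ((rvp c d e tj i).2 * (tj i * (rvp c d e tj i).1)).
  by apply: mulr_ge0 => //; apply: mulr_ge0.
split => //; lra.
Qed.

Lemma rvp_c0 (R : realType) (d e : R) (tj : nat -> R) i : (rvp 0 d e tj i).1 = 0.
Proof. by elim: i => [|i IH] /=; rewrite ?mul0r ?IH ?addr0. Qed.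

Lemma row_exists (R : realType) K (d e : R) (tj : nat -> R) : (0 < K)%N ->
  0 < d -> 0 <= e -> (forall l, 0 <= tj l) ->
  exists2 c0, 0 < c0 & \sum_(i < K) (rvp c0 d e tj i).1 = 1.
Proof.
case: K => // K _ hd he ht.
pose F := \sum_(i < K.+1) (rvp 'X d%:P e%:P (fun l => (tj l)%:P) i).1 - 1.
have FE : forall c, F.[c] = \sum_(i < K.+1) (rvp c d e tj i).1 - 1.
  move=> c; rewrite hornerD horner_sum hornerN hornerC.
  by congr (_ - _); apply: eq_bigr => i _; case: (rvp_horner c d e tj i).
have F0 : F.[0] <= 0.
  rewrite FE; under eq_bigr do rewrite rvp_c0.
  by rewrite big1 // sub0r lerN10.
have hid : 0 <= d^-1 by rewrite invr_ge0 ltW.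
have F1 : 0 <= F.[d^-1].
  rewrite FE subr_ge0 big_ord_recl.
  have [h1 _] := rvp_ge0 hid (ltW hd) he ht 0.
  rewrite mulVf in h1; last by rewrite gt_eqF.
  have : 0 <= \sum_(i < K) (rvp d^-1 d e tj (bump 0 i)).1.
    apply: sumr_ge0 => i _.
    have [h2 _] := rvp_ge0 hid (ltW hd) he ht (bump 0 i).
    by apply: le_trans h2; apply: mulr_ge0 => //; apply: ltW.
  lra.
have [x /andP[hx0 _] hroot] := poly_ivt hid (introT andP (conj F0 F1)).
have hFx : F.[x] = 0 by apply/eqP.
rewrite FE in hFx.
exists x; last by lra.
rewrite lt_neqAle hx0 andbT; apply/eqP => hx.
move: hFx; rewrite -hx; under eq_bigr do rewrite rvp_c0.
rewrite big1 // => /eqP; rewrite sub0r oppr_eq0 oner_eq0 //.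
Qed.

Lemma dcoef_local (R : realType) K (t pi pi' : nat -> nat -> R) j : (0 < K)%N ->
  (forall k i, (k < j)%N -> (i < K)%N -> pi k i = pi' k i) ->
  dcoef K t pi j = dcoef K t pi' j.
Proof. by move=> hK h; have := DD_local t hK h; rewrite /DD /dcoef. Qed.

Lemma ecoef_local (R : realType) K (t pi pi' : nat -> nat -> R) j : (0 < K)%N ->
  (forall k i, (k < j)%N -> (i < K)%N -> pi k i = pi' k i) ->
  ecoef K t pi j = ecoef K t pi' j.
Proof. by move=> hK h; rewrite /ecoef (prefprod_local t (j:=j) hK h). Qed.

Lemma roweq_local (R : realType) K (t pi pi' : nat -> nat -> R) c j : (0 < K)%N ->
  (forall k i, (k <= j)%N -> (i < K)%N -> pi k i = pi' k i) ->
  roweq K t c pi j -> roweq K t c pi' j.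
Proof.
move=> hK h [h0 hS].
have hl : forall k i, (k < j)%N -> (i < K)%N -> pi k i = pi' k i.
  by move=> k i hk hi; apply: h => //; apply: ltnW.
split; first by rewrite -(h j 0%N) // h0 (dcoef_local t hK hl).
move=> i hi; rewrite -(h j i) //; last by lia.
rewrite -(h j i.-1) //; last by lia.
rewrite hS // (ecoef_local t hK hl); congr (_ + _ * _).
apply: eq_bigr => l _; rewrite (h j l) //; have := ltn_ord l; lia.
Qed.

Lemma exists_rows (R : realType) U K (t : nat -> nat -> R) : (0 < K)%N ->
  (forall j i, (j < U)%N -> (i < K)%N -> 0 < t j i <= 1) ->
  forall n, (n <= U)%N -> exists (c : nat -> R) (pi : nat -> nat -> R),
    forall j, (j < n)%N -> [/\ 0 < c j, roweq K t (c j) pi j & \sum_(i < K) pi j i = 1].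
Proof.
move=> hK ht; elim => [|n IH] hn.
  by exists (fun _ => 1), (fun _ _ => 0).
have [c [pi hc]] := IH (ltnW hn).
have htn : forall j i, (j < n)%N -> (i < K)%N -> 0 < t j i.
  by move=> j i hj hi; case/andP: (ht j i (leq_trans hj (ltnW hn)) hi).
have hpos := pi_pos hK htn (fun j hj => let: And3 a b _ := hc j hj in conj a b).
have hx : forall s, (s < n * K)%N -> 0 <= xx K t pi s.
  move=> s hs; apply: mulr_ge0; apply: ltW; last exact: hpos.
  by apply: htn; [rewrite ltn_divLR | rewrite ltn_mod].
pose d := dcoef K t pi n; pose e := ecoef K t pi n.
have hd : 0 < d by apply: (lt_le_trans ltr01); apply: DD_ge1.
have he : 0 <= e by apply: prefprod_ge0.
pose tn := fun l => if (l < K)%N then t n l else 0.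
have htn0 : forall l, 0 <= tn l.
  move=> l; rewrite /tn; case: ifP => // hl.
  by case/andP: (ht n l hn hl) => /ltW.
have [c0 hc0 hsum] := row_exists hK hd he htn0.
pose pi' := fun k i => if (k == n)%N then (rvp c0 d e tn i).1 else pi k i.
pose c' := fun k => if (k == n)%N then c0 else c k.
have hloc : forall k i, (k < n)%N -> (i < K)%N -> pi k i = pi' k i.
  by move=> k i hk _; rewrite /pi' ltn_eqF.
exists c', pi' => j hj.
case: (ltngtP j n) => hjn; last 2 first.
- lia.
- subst j; rewrite /c' eqxx; split => //.
  + split.
    * by rewrite /pi' eqxx /= -(dcoef_local t hK hloc).
    * move=> i /andP[hi0 hi]; rewrite -(ecoef_local t hK hloc) /pi' eqxx rvp_rec //.
      congr (_ + _ * _); apply: eq_bigr => l _; rewrite /tn.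
      by have := ltn_ord l; case: ifP => //; lia.
  + by rewrite /pi' eqxx.
- have [h1 h2 h3] := hc j hjn; rewrite /c' ltn_eqF //; split => //.
  + apply: roweq_local h2 => // k i hk hi; rewrite /pi' ltn_eqF //; lia.
  + by rewrite /pi' ltn_eqF.
Qed.

Lemma exists_adm (R : realType) U K (t : nat -> nat -> R) : (0 < K)%N ->
  (forall j i, (j < U)%N -> (i < K)%N -> 0 < t j i <= 1) ->
  exists (c : nat -> R) (pi : nat -> nat -> R), admissible U K t c pi.
Proof.
move=> hK ht; have [c [pi h]] := exists_rows hK ht (leqnn U).
exists c, pi; split; [|split].
- by move=> j hj; case: (h j hj).
- by move=> j hj; case: (h j hj).
- by move=> j hj; case: (h j hj).
Qed.



Lemma trans_sum_pos (R : realType) U K (t pi : nat -> nat -> R) (p : 'I_(U * K).+1 -> R)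
  (m : 'I_(U * K).+1) : (0 < m)%N ->
  \sum_n p n * trans U K t pi n m = p (inord m.-1) * xx K t pi m.-1.
Proof.
move=> hm.
have hmN : (m.-1 < U * K)%N by have := ltn_ord m; lia.
have hv : (inord m.-1 : 'I_(U * K).+1) = m.-1 :> nat by rewrite inordK //; lia.
rewrite (bigD1 (inord m.-1)) //= big1 ?addr0.
  rewrite /trans hv hmN /= prednK // eqxx.
  by rewrite (_ : (m : nat) == 0%N = false) ?addr0 //; lia.
move=> n hn; rewrite /trans; case: ifP => hnN.
  rewrite (_ : (m : nat) == 0%N = false); last by lia.
  case: eqP => [hmn|_]; last by rewrite !addr0 mulr0.
  move: hn; have -> : n = inord m.-1 by apply: val_inj; rewrite /= hv hmn.
  by rewrite eqxx.
rewrite (_ : (m : nat) == 0%N = false) ?mulr0 //; lia.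
Qed.

Lemma telesc (R : realType) (f : nat -> R) N :
  \sum_(n < N) (f n - f n.+1) = f 0%N - f N.
Proof.
elim: N => [|N IH]; first by rewrite big_ord0 subrr.
rewrite big_ord_recr /= IH; lra.
Qed.

Lemma stat_exists (R : realType) U K (t pi : nat -> nat -> R) :
  (forall r, (r < U * K)%N -> 0 <= xx K t pi r) ->
  is_stationary _ (trans U K t pi)
    (fun m : 'I_(U * K).+1 => prefprod K t pi m / DD K t pi (U * K)).
Proof.
move=> hx.
have hS : 1 <= DD K t pi (U * K) by apply: DD_ge1.
have hS0 : DD K t pi (U * K) != 0 by apply/eqP => h; rewrite h in hS; lra.
split; [|split].
- move=> m; apply: divr_ge0; last lra.
  by apply: prefprod_ge0 => s hs; apply: hx; have := ltn_ord m; lia.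
- by rewrite -mulr_suml divff.
- case=> [[|m] hm].
  + rewrite big_ord_recr /=.
    have E1 : trans U K t pi ord_max (Ordinal hm) = 1 by rewrite /trans ltnn.
    rewrite E1 mulr1.
    have E : forall i : 'I_(U * K), trans U K t pi (widen_ord (leqnSn _) i) (Ordinal hm)
       = 1 - xx K t pi i.
      by move=> i; rewrite /trans /= ltn_ord /xx add0r.
    under eq_bigr do rewrite E.
    have E2 : forall i : nat, prefprod K t pi i / DD K t pi (U * K) * (1 - xx K t pi i)
       = (prefprod K t pi i - prefprod K t pi i.+1) / DD K t pi (U * K).
      by move=> i; rewrite prefprodS; ring.
    under eq_bigr do rewrite E2.
    by rewrite -mulr_suml (telesc (prefprod K t pi)) mulrBl subrK.
  + rewrite trans_sum_pos //= inordK; last by lia.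
    by rewrite prefprodS mulrAC.
Qed.

Lemma stat_form (R : realType) U K (t pi : nat -> nat -> R) (p : 'I_(U * K).+1 -> R) :
  (forall r, (r < U * K)%N -> 0 <= xx K t pi r) ->
  is_stationary _ (trans U K t pi) p ->
  p ord_max = prefprod K t pi (U * K) / DD K t pi (U * K).
Proof.
move=> hx [hp0 [hsum heq]].
have hS : 1 <= DD K t pi (U * K) by apply: DD_ge1.
have hS0 : DD K t pi (U * K) != 0 by apply/eqP => h; rewrite h in hS; lra.
pose q := fun m : nat => p (inord m).
have hq : forall m, (m <= U * K)%N -> q m = q 0%N * prefprod K t pi m.
  elim => [|m IH] hm; first by rewrite prefprod0 mulr1.
  have := heq (inord m.+1); rewrite trans_sum_pos; last by rewrite inordK.
  rewrite inordK //= => H.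
  rewrite /q -H -/(q m) -/(q 0%N) IH; last by lia.
  by rewrite prefprodS mulrA.
have hsum' : q 0%N * DD K t pi (U * K) = 1.
  rewrite -hsum /DD mulr_sumr; apply: eq_bigr => m _.
  rewrite -hq; last by have := ltn_ord m; lia.
  by rewrite /q inord_val.
have -> : p ord_max = q (U * K)%N by rewrite /q; congr p; apply: val_inj; rewrite /= inordK.
rewrite hq // (_ : q 0%N = (DD K t pi (U * K))^-1); first by rewrite mulrC.
by apply: (mulIf hS0); rewrite mulVf.
Qed.



Lemma ln_le_sub1 (R : realType) (u : R) : 0 < u -> ln u <= u - 1.
Proof.
move=> hu; have := expR_ge1Dx (ln u); rewrite lnK ?posrE //; lra.
Qed.

Lemma key (R : realType) N (x x' : nat -> R) :
  (forall r, (r < N)%N -> 0 < x r) -> (forall r, (r < N)%N -> 0 < x' r) ->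
  \sum_(r < N) (\sum_(m < r.+1) \prod_(s < m) x s) * (x' r / x r - 1) <= 0 ->
  (\prod_(s < N) x' s) / (\sum_(m < N.+1) \prod_(s < m) x' s) <=
  (\prod_(s < N) x s) / (\sum_(m < N.+1) \prod_(s < m) x s).
Proof.
move=> hx hx' hsum.
pose P := fun m : nat => \prod_(s < m) x s.
pose P' := fun m : nat => \prod_(s < m) x' s.
pose D := fun n : nat => \sum_(m < n.+1) P m.
pose S' := \sum_(m < N.+1) P' m.
pose z := fun m => P' m / P m.
pose rho := fun r => x' r / x r.
have hP : forall m, (m <= N)%N -> 0 < P m.
  by move=> m hm; apply: prodr_gt0 => s _; apply: hx; have := ltn_ord s; lia.
have hP' : forall m, (m <= N)%N -> 0 < P' m.
  by move=> m hm; apply: prodr_gt0 => s _; apply: hx'; have := ltn_ord s; lia.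
have hD : forall n, (n <= N)%N -> 0 < D n.
  move=> n hn; rewrite /D big_ord_recl; apply: ltr_wpDr; last by apply: hP.
  by apply: sumr_ge0 => i _; apply: ltW; apply: hP; rewrite lift0; have := ltn_ord i; lia.
have hS' : 0 < S'.
  rewrite /S' big_ord_recl; apply: ltr_wpDr; last by apply: hP'.
  by apply: sumr_ge0 => i _; apply: ltW; apply: hP'; rewrite lift0; have := ltn_ord i; lia.
have hz : forall m, (m <= N)%N -> 0 < z m by move=> m hm; apply: divr_gt0; [apply: hP' | apply: hP].
have hrho : forall r, (r < N)%N -> 0 < rho r by move=> r hr; apply: divr_gt0; [apply: hx' | apply: hx].
have hzS : forall m, (m < N)%N -> z m.+1 = z m * rho m.
  move=> m hm; rewrite /z /rho /P /P' !big_ord_recr /=.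
  have h1 := hP m (ltnW hm); have h2 := hx m hm.
  field; apply/andP; split; apply: lt0r_neq0 => //.
have hlnz : forall m, (m < N)%N -> ln (z m.+1) = ln (z m) + ln (rho m).
  by move=> m hm; rewrite hzS // lnM // posrE; [apply: hz; lia | apply: hrho].
have hW : forall n, (n <= N)%N -> \sum_(m < n.+1) P m * ln (z m) =
    D n * ln (z n) - \sum_(r < n) D r * ln (rho r).
  elim => [|n IH] hn.
    rewrite big_ord_recl big_ord0 big_ord0 /z /P /D big_ord_recl big_ord0 /=.
    by rewrite /P /P' !big_ord0 divr1 ln1 !mulr0 !addr0 subr0.
  have hDS : D n.+1 = D n + P n.+1 by rewrite /D big_ord_recr.
  rewrite big_ord_recr /= IH; last by lia.
  rewrite [in RHS]big_ord_recr /= hlnz // hDS.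
  move: (D n) (P n.+1) (ln (z n)) (ln (rho n)) (\sum_(r < n) D r * ln (rho r)) => a b c d e.
  ring.
pose y := S' / D N.
have hy : 0 < y by apply: divr_gt0 => //; apply: hD.
have hJ : \sum_(m < N.+1) P m * ln (z m) <= D N * ln y.
  have step : forall m : 'I_N.+1, P m * ln (z m) <= P m * ln y + (P' m / y - P m).
    move=> m; have hm : (m <= N)%N by have := ltn_ord m; lia.
    have h1 := hP m hm; have h2 := hz m hm.
    have := ln_le_sub1 (divr_gt0 h2 hy); rewrite ln_div ?posrE //.
    have -> : P' m / y - P m = P m * (z m / y - 1).
      rewrite /z; field; apply/andP; split; apply: lt0r_neq0 => //.
    move=> H.
    have : P m * (ln (z m) - ln y) <= P m * (z m / y - 1).
      by apply: ler_wpM2l; [exact: ltW | exact: H].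
    rewrite mulrBr; lra.
  apply: le_trans (ler_sum _ (fun m _ => step m)) _.
  rewrite big_split /= -mulr_suml big_split /= sumrN -mulr_suml -/S' -/(D N).
  have -> : S' / y = D N.
    rewrite /y; field; apply/andP; split; apply: lt0r_neq0 => //; exact: hD (leqnn N).
  lra.
have hd : \sum_(r < N) D r * ln (rho r) <= 0.
  apply: le_trans hsum; apply: ler_sum => r _.
  apply: ler_wpM2l; first by apply: ltW; apply: hD; have := ltn_ord r; lia.
  by apply: ln_le_sub1; apply: hrho.
have hfin : ln (z N) <= ln y.
  have := hW N (leqnn N); rewrite -/P => hWN.
  have hDN := hD N (leqnn N).
  have : D N * ln (z N) <= D N * ln y by lra.
  by rewrite ler_pM2l.
rewrite ler_ln ?posrE // in hfin; last by apply: hz.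
move: hfin; rewrite /z /y => h.
change (P' N / S' <= P N / D N).
have h1 := hP N (leqnn N); have h2 := hD N (leqnn N).
rewrite ler_pdivrMr // mulrAC ler_pdivlMr //.
move: h; rewrite ler_pdivrMr // mulrAC ler_pdivlMr // => h.
by rewrite [P N * _]mulrC.
Qed.



Lemma sum_split (R : realType) U K (f : nat -> nat -> R) :
  \sum_(r < U * K) f (r %/ K)%N (r %% K)%N = \sum_(j < U) \sum_(i < K) f j i.
Proof.
elim: U => [|U IH]; first by rewrite mul0n !big_ord0.
rewrite mulSnr big_split_ord /= IH big_ord_recr /=; congr (_ + _).
apply: eq_bigr => i _; have [h1 h2] := @divmod_row K U i (ltn_ord i).
by rewrite h1 h2.
Qed.

Unset Implicit Arguments.

Theorem proposition13 (R : realType) (U K : nat) (t : nat -> nat -> R)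
    (hU : (0 < U)%N) (hK : (0 < K)%N)
    (ht : forall j i, (j < U)%N -> (i < K)%N -> 0 < t j i <= 1) :
  (* existence of positive c_j solving the row-sum equations *)
  (exists (c : nat -> R) (pi : nat -> nat -> R), admissible U K t c pi) /\
  (* uniqueness of the c_j *)
  (forall (c c' : nat -> R) (pi pi' : nat -> nat -> R),
      admissible U K t c pi -> admissible U K t c' pi' ->
      forall j, (j < U)%N -> c j = c' j) /\
  (* the resulting policy is an optimal memoryless policy *)
  (forall (c : nat -> R) (pi : nat -> nat -> R),
      admissible U K t c pi ->
      is_policy U K pi /\
      (exists p, is_stationary _ (trans U K t pi) p) /\
      forall (pi' : nat -> nat -> R), is_policy U K pi' ->
      forall p p' : 'I_(U * K).+1 -> R,
        is_stationary _ (trans U K t pi) p ->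
        is_stationary _ (trans U K t pi') p' ->
        p' ord_max <= p ord_max).
Proof.
split; first exact: exists_adm hK ht.
split.
  by move=> c c' pi pi' ha ha' j hj; case: (uniq_rows hK ht ha ha' hj).
move=> c pi ha.
have hx := adm_xpos hK ht ha.
have hx0 : forall r, (r < U * K)%N -> 0 <= xx K t pi r by move=> r hr; apply: ltW; apply: hx.
have htU : forall j i, (j < U)%N -> (i < K)%N -> 0 < t j i.
  by move=> j i hj hi; case/andP: (ht j i hj hi).
have hpi : forall j i, (j < U)%N -> (i < K)%N -> 0 < pi j i.
  move=> j i hj hi; have [h1 h2] := @divmod_row K j i hi.
  have := pi_pos hK htU (adm_rows ha) (r := (j * K + i)%N).
  rewrite h1 h2; apply.
  have : (j * K + K <= U * K)%N by rewrite -mulSnr leq_mul2r hj orbT.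
  lia.
split.
  by move=> j hj; split; [move=> i hi; apply: ltW; apply: hpi | apply: adm_sum ha j hj].
split; first by eexists; apply: stat_exists.
move=> pi' hpol p p' hp hp'.
have hx'0 : forall r, (r < U * K)%N -> 0 <= xx K t pi' r.
  move=> r hr; have hj : (r %/ K < U)%N by rewrite ltn_divLR.
  have hi : (r %% K < K)%N by rewrite ltn_mod.
  apply: mulr_ge0; first by apply: ltW; apply: htU.
  by case: (hpol _ hj) => h _; apply: h.
rewrite (stat_form hx0 hp) (stat_form hx'0 hp').
case: (boolP (prefprod K t pi' (U * K) == 0)) => hz.
  rewrite (eqP hz) mul0r; apply: divr_ge0; first by apply: prefprod_ge0.
  by apply: le_trans (DD_ge1 hx0); apply: ler01.
have hx'pos : forall r, (r < U * K)%N -> 0 < xx K t pi' r.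
  move=> r hr; rewrite lt_neqAle hx'0 // andbT eq_sym; apply/negP => /eqP h0.
  move: hz; rewrite /prefprod (bigD1 (Ordinal hr)) //= -/(xx K t pi' r) h0 mul0r eqxx.
  by [].
apply: (key (x := xx K t pi) (x' := xx K t pi')) => //.
have E : forall r : 'I_(U * K),
    (\sum_(m < r.+1) \prod_(s < m) xx K t pi s) * (xx K t pi' r / xx K t pi r - 1)
    = (pi' (r %/ K)%N (r %% K)%N - pi (r %/ K)%N (r %% K)%N) / c (r %/ K)%N.
  move=> r; have hj : (r %/ K < U)%N by rewrite ltn_divLR.
  have hi : (r %% K < K)%N by rewrite ltn_mod.
  have [hc hrow] := adm_rows ha hj.
  have hD := row_D hrow hi; rewrite -divn_eq in hD.
  change (\sum_(m < r.+1) \prod_(s < m) xx K t pi s) with (DD K t pi r).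
  have hDv : DD K t pi r = pi (r %/ K)%N (r %% K)%N / c (r %/ K)%N.
    by rewrite hD [c _ * _]mulrC mulfK // gt_eqF.
  rewrite hDv /xx.
  have h1 := htU _ _ hj hi; have h2 := hpi _ _ hj hi.
  field; rewrite !gt_eqF //.
under eq_bigr do rewrite E.
rewrite (@sum_split R U K (fun j i => (pi' j i - pi j i) / c j)).
rewrite big1 // => j _.
rewrite -mulr_suml sumrB (adm_sum ha) //.
case: (hpol j (ltn_ord j)) => _ ->.
by rewrite subrr mul0r.
Qed.
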